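(* Let $\lambda_1>\lambda_2$ be nonzero real numbers, let $C_1,C_2\in\mathbb{R}$, and set $$q(t)=\frac{C_1}{\lambda_1}\big(e^{\lambda_1 t}-1\big)+\frac{C_2}{\lambda_2}\big(e^{\lambda_2 t}-1\big)+1 .$$ Write $\Theta=C_1\left(-\tfrac{C_2}{C_1}\right)^{\frac{\lambda_1}{\lambda_1-\lambda_2}}\left(\tfrac1{\lambda_1}-\tfrac1{\lambda_2}\right)+1-\tfrac{C_1}{\lambda_1}-\tfrac{C_2}{\lambda_2}$ (defined when $C_1>0>C_2$). Then $q$ vanishes at some $t>0$ if and only if one of the following holds: 1. $\lambda_1>0$ and: (a) $C_1<0$; or (b) $C_1>0$, $C_2<0$, $C_1+C_2<0$, $\Theta\le 0$; or (c) $C_1=0$, $C_2<0$, $\lambda_2>0$; or (d) $C_1=0$, $C_2<\lambda_2$, $\lambda_2<0$. 2. $\lambda_1<0$ and: (a) $C_1>0$, $C_2<0$, $C_1+C_2<0$, $\Theta\le0$; or (b) $C_1<0$, $\tfrac{C_1}{\lambda_1}+\tfrac{C_2}{\lambda_2}>1$; or (c) $C_1=0$, $C_2<0$, $\lambda_2>0$; or (d) $C_1=0$, $C_2<\lambda_2$, $\lambda_2<0$.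
   Context: Consider the extended system $\dot{\mathbf v}=-v_1\mathbf v+Q\mathbf v$, $\mathbf v=(v_1,v_2)$, for a constant real $2\times2$ matrix $Q$; its solution blows up in finite positive time iff the decisive function $q$ (with $q(0)=1$, $\dot q=u_1$, $\dot{\mathbf u}=Q\mathbf u$, $\mathbf u(0)=\mathbf v(0)$, $\mathbf v=\mathbf u/q$) vanishes at some $t>0$. If $AQA^{-1}=\mathrm{diag}(\lambda_1,\lambda_2)$ with $A=(a_{ij})$ nonsingular, then $q$ has exactly the form above with $C_1=\frac{a_{22}}{\det A}(a_{11}v_1(0)+a_{12}v_2(0))$, $C_2=-\frac{a_{12}}{\det A}(a_{21}v_1(0)+a_{22}v_2(0))$; so the claim characterizes finite-time blow-up of the extended system in this case. *)

(* Defs.v *)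
From Stdlib Require Import Reals.
Open Scope R_scope.

Definition q (l1 l2 C1 C2 t : R) : R :=
  C1 / l1 * (exp (l1 * t) - 1) + C2 / l2 * (exp (l2 * t) - 1) + 1.

(* Theta; only meaningful (and only used) when C1 > 0 > C2, so that the
   base -C2/C1 is positive and Rpower is the usual real power. *)
Definition Theta (l1 l2 C1 C2 : R) : R :=
  C1 * Rpower (- C2 / C1) (l1 / (l1 - l2)) * (1 / l1 - 1 / l2)
  + 1 - C1 / l1 - C2 / l2.

(* Main.v *)
Require Import Defs.
From Stdlib Require Import Reals Lra Psatz.
From Coquelicot Require Import Coquelicot.
Open Scope R_scope.

Lemma qD l1 l2 C1 C2 t : l1 <> 0 -> l2 <> 0 ->
  derivable_pt_lim (q l1 l2 C1 C2) t (C1*exp(l1*t)+C2*exp(l2*t)).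
Proof. intros. apply is_derive_Reals. unfold q. auto_derive; [auto|field; auto]. Qed.

Lemma q0 l1 l2 C1 C2 : q l1 l2 C1 C2 0 = 1.
Proof. unfold q. rewrite !Rmult_0_r, exp_0. ring. Qed.

Lemma qcont l1 l2 C1 C2 : l1 <> 0 -> l2 <> 0 -> continuity (q l1 l2 C1 C2).
Proof. intros H1 H2 t. apply derivable_continuous_pt. exists (C1*exp(l1*t)+C2*exp(l2*t)). now apply qD. Qed.

Lemma mono f f' a b : a <= b -> (forall c, derivable_pt_lim f c (f' c)) ->
  (forall c, a < c < b -> 0 <= f' c) -> f a <= f b.
Proof.
  intros Hab Hd Hp. destruct (Rle_lt_or_eq_dec _ _ Hab) as [H|H]; [|subst; lra].
  destruct (MVT_cor2 f f' a b H (fun c _ => Hd c)) as [c [E Hc]].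
  specialize (Hp c Hc). nra.
Qed.

Lemma minl f f' s t : (forall c, derivable_pt_lim f c (f' c)) ->
  (forall c, 0 <= f' c * (c - s)) -> f s <= f t.
Proof.
  intros Hd Hp. destruct (Rtotal_order t s) as [H|[H|H]].
  - destruct (MVT_cor2 f f' t s H (fun c _ => Hd c)) as [c [E Hc]].
    specialize (Hp c). assert (f' c <= 0) by nra. nra.
  - subst; lra.
  - destruct (MVT_cor2 f f' s t H (fun c _ => Hd c)) as [c [E Hc]].
    specialize (Hp c). assert (f' c >= 0) by nra. nra.
Qed.

Lemma zero_of l1 l2 C1 C2 t : l1 <> 0 -> l2 <> 0 -> t > 0 -> q l1 l2 C1 C2 t <= 0 ->
  exists u, u > 0 /\ q l1 l2 C1 C2 u = 0.
Proof.
  intros H1 H2 Ht Hq.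
  destruct (IVT_cor (q l1 l2 C1 C2) 0 t (qcont _ _ _ _ H1 H2)) as [z [Hz Ez]].
  lra. rewrite q0; lra.
  exists z; split; auto. destruct (Rle_lt_or_eq_dec _ _ (proj1 Hz)); auto.
  subst. rewrite q0 in Ez. lra.
Qed.

Lemma absf x : - Rabs x <= x <= Rabs x.
Proof. split_Rabs; lra. Qed.

Lemma exp_le x y : x <= y -> exp x <= exp y.
Proof. intros H; destruct (Rle_lt_or_eq_dec _ _ H) as [H'|H']; [apply Rlt_le, exp_increasing; auto|subst; lra]. Qed.

Lemma ex1a l1 l2 C1 C2 : l1 > l2 -> l1 > 0 -> l2 <> 0 -> C1 < 0 ->
  exists t, t > 0 /\ q l1 l2 C1 C2 t <= 0.
Proof.
  intros H12 H1 H2 HC.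
  set (a := C1/l1). set (b := C2/l2).
  assert (Ea : a * l1 = C1) by (unfold a; field; lra).
  assert (ha : a < 0) by nra.
  destruct (Rlt_or_le 0 l2) as [Hl2|Hl2].
  - set (c := 1 - a - b). set (K := Rabs c + 1). set (k := l1 - l2).
    set (t := (K + Rabs b + Rabs a)/(-a*k)).
    assert (hk : k > 0) by (unfold k; lra).
    assert (hK : K > 0) by (unfold K; pose proof (Rabs_pos c); lra).
    assert (Et : a*k*t = -(K + Rabs b + Rabs a)) by (unfold t; field; nra).
    pose proof (Rabs_pos a). pose proof (Rabs_pos b).
    assert (ht : t > 0).
    { unfold t. apply Rdiv_lt_0_compat; nra. }
    exists t; split; auto.
    assert (E1 : exp (l1*t) = exp (l2*t) * exp (k*t)).
    { rewrite <- exp_plus. f_equal. unfold k; ring. }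
    pose proof (exp_ineq1_le (k*t)).
    assert (h2 : 1 <= exp (l2*t)).
    { rewrite <- exp_0. apply exp_le. nra. }
    assert (h3 : a * exp (k*t) + b <= -K).
    { pose proof (absf a). pose proof (absf b). nra. }
    assert (h4 : exp (l2*t) * (a * exp (k*t) + b) <= -K) by nra.
    unfold q. fold a b. rewrite E1.
    pose proof (absf c). assert (Hq: a * (exp (l2 * t) * exp (k * t) - 1) + b * (exp (l2 * t) - 1) + 1 = exp (l2*t) * (a * exp (k*t) + b) + c) by (unfold c; ring). rewrite Hq. unfold K in h4. lra.
  - assert (Hl2' : l2 < 0) by lra.
    set (t := (Rabs b + 1)/(-C1)).
    pose proof (Rabs_pos b).
    assert (ht : t > 0) by (unfold t; apply Rdiv_lt_0_compat; lra).
    assert (Et : C1 * t = -(Rabs b + 1)) by (unfold t; field; lra).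
    exists t; split; auto.
    pose proof (exp_ineq1_le (l1*t)).
    assert (h2 : exp (l2*t) <= 1).
    { rewrite <- exp_0. apply exp_le. nra. }
    pose proof (exp_pos (l2*t)).
    assert (h3 : a * (exp (l1*t) - 1) <= C1 * t) by nra.
    assert (h4 : b * (exp (l2*t) - 1) <= Rabs b).
    { pose proof (absf b). destruct (Rle_or_lt 0 b); nra. }
    unfold q. fold a b. lra.
Qed.

Lemma ex1c l1 l2 C1 C2 : l1 <> 0 -> l2 > 0 -> C1 = 0 -> C2 < 0 ->
  exists t, t > 0 /\ q l1 l2 C1 C2 t <= 0.
Proof.
  intros H1 H2 HC HC2. subst C1.
  set (b := C2/l2). assert (Eb : b*l2 = C2) by (unfold b; field; lra).
  assert (hb : b < 0) by nra.
  exists (1/(-C2)). split. apply Rdiv_lt_0_compat; lra.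
  pose proof (exp_ineq1_le (l2*(1/(-C2)))).
  assert (E : l2 * (1/(-C2)) * b = -1) by (field_simplify; [|lra]; rewrite <- Eb; field; lra).
  unfold q. fold b. unfold Rdiv at 1. rewrite Rmult_0_l, Rmult_0_l. nra.
Qed.

Lemma ex1d l1 l2 C1 C2 : l1 <> 0 -> l2 < 0 -> C1 = 0 -> C2 < l2 ->
  exists t, t > 0 /\ q l1 l2 C1 C2 t <= 0.
Proof.
  intros H1 H2 HC HC2. subst C1.
  set (b := C2/l2). assert (Eb : b*l2 = C2) by (unfold b; field; lra).
  assert (hb : b > 1) by nra.
  set (t := (b/(b-1))/(-l2)).
  assert (ht : t > 0) by (unfold t; apply Rdiv_lt_0_compat; [apply Rdiv_lt_0_compat|]; lra).
  assert (Et : - l2 * t = b/(b-1)) by (unfold t; field; lra).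
  assert (Eb1 : b/(b-1) * (b-1) = b) by (field; lra).
  exists t; split; auto.
  pose proof (exp_ineq1_le (-l2*t)).
  assert (EF : exp (l2*t) * exp (-l2*t) = 1).
  { rewrite <- exp_plus. replace (l2*t + -l2*t) with 0 by ring. apply exp_0. }
  pose proof (exp_pos (l2*t)). pose proof (exp_pos (-l2*t)).
  assert (hF : exp (-l2*t) * (b-1) >= b) by nra.
  unfold q. fold b. unfold Rdiv at 1. rewrite Rmult_0_l, Rmult_0_l.
  assert (exp (-l2*t) * (0 + b * (exp (l2*t) - 1) + 1) <= 0) by nra.
  nra.
Qed.

Lemma ex2b l1 l2 C1 C2 : l1 > l2 -> l1 < 0 -> C1 < 0 -> C1/l1 + C2/l2 > 1 ->
  exists t, t > 0 /\ q l1 l2 C1 C2 t <= 0.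
Proof.
  intros H12 H1 HC HL.
  set (a := C1/l1) in *. set (b := C2/l2) in *.
  set (L := 1 - a - b). set (S := Rabs a + Rabs b).
  pose proof (Rabs_pos a). pose proof (Rabs_pos b).
  assert (hL : -L > 0) by (unfold L; lra).
  set (t := (S/(-L) + 1)/(-l1)).
  assert (hS : S/(-L) >= 0) by (unfold Rdiv; apply Rle_ge, Rmult_le_pos; [unfold S; lra|left; apply Rinv_0_lt_compat; lra]).
  assert (ht : t > 0) by (unfold t; apply Rdiv_lt_0_compat; lra).
  assert (Et : - l1 * t = S/(-L) + 1) by (unfold t; field; lra).
  assert (ES : S/(-L) * (-L) = S) by (field; lra).
  exists t; split; auto.
  set (F := exp (-l1*t)). set (G := exp (l1*t)).
  assert (hF : F >= 2 + S/(-L)) by (pose proof (exp_ineq1_le (-l1*t)); unfold F; lra).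
  assert (EF : G * F = 1).
  { unfold G, F. rewrite <- exp_plus. replace (l1*t + -l1*t) with 0 by ring. apply exp_0. }
  assert (hG : 0 < G) by apply exp_pos.
  assert (h2 : exp (l2*t) <= G) by (apply exp_le; nra).
  pose proof (exp_pos (l2*t)).
  assert (hE : a * G + b * exp (l2*t) <= S * G).
  { pose proof (absf a). pose proof (absf b). unfold S. nra. }
  assert (hSG : S * G <= -L).
  { assert (h5 : (-L) * (F - (2 + S/(-L))) >= 0) by (apply Rle_ge, Rmult_le_pos; lra).
    assert (h6 : S <= -L * F) by nra.
    assert (h7 : S * G <= -L * F * G) by (apply Rmult_le_compat_r; lra).
    replace (-L * F * G) with (-L * (G * F)) in h7 by ring. rewrite EF in h7. lra. }
  unfold q. fold a b. fold G. unfold L in *. lra.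
Qed.

Lemma tstar l1 l2 C1 C2 : l1 > l2 -> l1 <> 0 -> l2 <> 0 -> C1 > 0 -> C2 < 0 ->
  let ts := ln (-C2/C1) / (l1 - l2) in
  q l1 l2 C1 C2 ts = Theta l1 l2 C1 C2 /\
  (forall t, q l1 l2 C1 C2 ts <= q l1 l2 C1 C2 t) /\
  (C1 + C2 < 0 -> ts > 0).
Proof.
  intros H12 H1 H2 HC1 HC2 ts.
  set (r := -C2/C1).
  assert (hr : r > 0) by (unfold r; apply Rdiv_lt_0_compat; lra).
  set (k := l1 - l2). assert (hk : k > 0) by (unfold k; lra).
  assert (Ek : k * ts = ln r) by (unfold ts; fold r k; field; lra).
  assert (Ekr : exp (k*ts) = r) by (rewrite Ek; apply exp_ln; auto).
  split; [|split].
  - unfold q, Theta, Rpower. fold r.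
    assert (E1 : l1 * ts = l1 / (l1 - l2) * ln r) by (unfold ts; fold r; field; lra).
    assert (E2 : l2 * ts = l1 * ts + - ln r) by (rewrite <- Ek; unfold k; ring).
    rewrite E2, exp_plus, exp_Ropp, exp_ln by auto. rewrite E1.
    set (P := exp (l1 / (l1 - l2) * ln r)). unfold r. field. lra.
  - intros t. apply (minl _ (fun c => C1*exp(l1*c)+C2*exp(l2*c))).
    + intros c; apply qD; auto.
    + intros c.
      assert (E1 : exp (l1*c) = exp (l2*c) * exp (k*c)).
      { rewrite <- exp_plus. f_equal. unfold k; ring. }
      rewrite E1. pose proof (exp_pos (l2*c)).
      assert (Er : C1 * r + C2 = 0) by (unfold r; field; lra).
      destruct (Rle_or_lt ts c) as [Hc|Hc].
      * assert (exp (k*ts) <= exp (k*c)) by (apply exp_le; nra).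
        assert (0 <= C1 * exp (k*c) + C2) by nra.
        assert (0 <= exp (l2*c) * (C1 * exp (k*c) + C2)) by (apply Rmult_le_pos; lra).
        assert (0 <= exp (l2*c) * (C1 * exp (k*c) + C2) * (c - ts)) by (apply Rmult_le_pos; lra).
        nra.
      * assert (exp (k*c) <= exp (k*ts)) by (apply exp_le; nra).
        assert (C1 * exp (k*c) + C2 <= 0) by nra.
        assert (exp (l2*c) * (C1 * exp (k*c) + C2) <= 0) by nra.
        assert (0 <= exp (l2*c) * (C1 * exp (k*c) + C2) * (c - ts)) by nra.
        nra.
  - intros Hs. assert (r > 1) by (unfold r; apply (Rmult_lt_reg_r C1); [lra|]; field_simplify; lra).
    assert (ln r > 0) by (rewrite <- ln_1; apply ln_increasing; lra).
    nra.
Qed.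

Lemma nonneg_deriv l1 l2 C1 C2 t : l1 <> 0 -> l2 <> 0 -> t > 0 ->
  (forall c, 0 < c < t -> 0 <= C1*exp(l1*c)+C2*exp(l2*c)) -> q l1 l2 C1 C2 t >= 1.
Proof.
  intros H1 H2 Ht Hd. rewrite <- (q0 l1 l2 C1 C2). apply Rle_ge.
  apply (mono _ (fun c => C1*exp(l1*c)+C2*exp(l2*c))); [lra| |auto].
  intros c; apply qD; auto.
Qed.

Lemma no_pos l1 l2 C1 C2 t : l1 > l2 -> l1 <> 0 -> l2 <> 0 -> t > 0 ->
  ((C1 >= 0 /\ C2 >= 0) \/ (C1 > 0 /\ C2 < 0 /\ C1 + C2 >= 0)) -> q l1 l2 C1 C2 t >= 1.
Proof.
  intros H12 H1 H2 Ht HH. apply nonneg_deriv; auto. intros c Hc.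
  pose proof (exp_pos (l1*c)). pose proof (exp_pos (l2*c)).
  destruct HH as [[]|[? []]].
  - nra.
  - assert (E1 : exp (l1*c) = exp (l2*c) * exp ((l1-l2)*c)).
    { rewrite <- exp_plus. f_equal. ring. }
    rewrite E1. pose proof (exp_ineq1_le ((l1-l2)*c)).
    assert (0 <= (l1-l2)*c) by nra.
    assert (0 <= C1 * exp ((l1-l2)*c) + C2) by nra.
    nra.
Qed.

Lemma no_d l1 l2 C1 C2 t : l1 <> 0 -> l2 < 0 -> C1 = 0 -> C2 < 0 -> C2 >= l2 -> t > 0 ->
  q l1 l2 C1 C2 t > 0.
Proof.
  intros H1 H2 HC HC2 HC3 Ht. subst C1.
  set (b := C2/l2). assert (Eb : b*l2 = C2) by (unfold b; field; lra).
  assert (hb : 0 < b <= 1) by (split; nra).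
  assert (exp (l2*t) < 1) by (rewrite <- exp_0; apply exp_increasing; nra).
  pose proof (exp_pos (l2*t)).
  unfold q. fold b. unfold Rdiv at 1. rewrite Rmult_0_l, Rmult_0_l. nra.
Qed.

Lemma no_2b l1 l2 C1 C2 t : l1 > l2 -> l1 < 0 -> C1 < 0 -> C1/l1 + C2/l2 <= 1 -> t > 0 ->
  q l1 l2 C1 C2 t > 0.
Proof.
  intros H12 H1 HC HL Ht.
  assert (H2 : l2 <> 0) by lra. assert (H1' : l1 <> 0) by lra.
  set (a := C1/l1) in *. set (b := C2/l2) in *.
  assert (Ea : a*l1 = C1) by (unfold a; field; lra).
  assert (Eb : b*l2 = C2) by (unfold b; field; lra).
  assert (ha : a > 0) by nra.
  set (k := l1 - l2). assert (hk : k > 0) by (unfold k; lra).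
  assert (Ee : forall c, exp (l1*c) = exp (l2*c) * exp (k*c)).
  { intros c. rewrite <- exp_plus. f_equal. unfold k; ring. }
  destruct (Rlt_or_le 0 (a * exp (k*t) + b)) as [Hp|Hn].
  - pose proof (exp_pos (l2*t)).
    assert (0 < exp (l2*t) * (a * exp (k*t) + b)) by (apply Rmult_lt_0_compat; lra).
    unfold q. fold a b. rewrite Ee. nra.
  - assert (q l1 l2 C1 C2 t >= 1); [|lra].
    apply nonneg_deriv; auto. intros c Hc.
    assert (exp (k*c) < exp (k*t)) by (apply exp_increasing; nra).
    assert (hc : a * exp (k*c) + b < 0) by nra.
    assert (hb : b < 0) by (pose proof (exp_pos (k*c)); nra).
    rewrite Ee. pose proof (exp_pos (l2*c)).
    assert (0 < C1 * exp (k*c) + C2).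
    { rewrite <- Ea, <- Eb. assert (l1 * (a * exp (k * c) + b) > 0) by nra. nra. }
    nra.
Qed.

Theorem mainTheorem2 (l1 l2 C1 C2 : R) :
  l1 > l2 -> l1 <> 0 -> l2 <> 0 ->
  ((exists t : R, t > 0 /\ q l1 l2 C1 C2 t = 0) <->
   ((l1 > 0 /\
      (C1 < 0 \/
       (C1 > 0 /\ C2 < 0 /\ C1 + C2 < 0 /\ Theta l1 l2 C1 C2 <= 0) \/
       (C1 = 0 /\ C2 < 0 /\ l2 > 0) \/
       (C1 = 0 /\ C2 < l2 /\ l2 < 0))) \/
    (l1 < 0 /\
      ((C1 > 0 /\ C2 < 0 /\ C1 + C2 < 0 /\ Theta l1 l2 C1 C2 <= 0) \/
       (C1 < 0 /\ C1 / l1 + C2 / l2 > 1) \/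
       (C1 = 0 /\ C2 < 0 /\ l2 > 0) \/
       (C1 = 0 /\ C2 < l2 /\ l2 < 0))))).
Proof.
  intros H12 H1 H2.
  assert (Hsg : l1 > 0 \/ l1 < 0) by lra.
  split.
  - intros [t [Ht Hq]].
    destruct (Rtotal_order C1 0) as [HC1|[HC1|HC1]].
    + destruct Hsg as [Hl1|Hl1]; [left; split; auto|right; split; auto].
      right; left; split; auto.
      destruct (Rle_or_lt (C1/l1 + C2/l2) 1) as [HL|HL]; auto.
      pose proof (no_2b l1 l2 C1 C2 t H12 Hl1 HC1 HL Ht). lra.
    + destruct (Rlt_or_le C2 0) as [HC2|HC2].
      2:{ pose proof (no_pos l1 l2 C1 C2 t H12 H1 H2 Ht (or_introl (conj (Req_ge _ _ HC1) (Rle_ge _ _ HC2)))). lra. }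
      destruct (Rtotal_order l2 0) as [Hl2|[Hl2|Hl2]]; [|lra|].
      * destruct (Rlt_or_le C2 l2) as [HC3|HC3].
        -- destruct Hsg as [Hl1|Hl1]; [left|right]; split; auto; right; right; right; auto.
        -- pose proof (no_d l1 l2 C1 C2 t H1 Hl2 HC1 HC2 (Rle_ge _ _ HC3) Ht). lra.
      * destruct Hsg as [Hl1|Hl1]; [left|right]; split; auto; right; right; left; auto.
    + destruct (Rlt_or_le C2 0) as [HC2|HC2].
      2:{ pose proof (no_pos l1 l2 C1 C2 t H12 H1 H2 Ht (or_introl (conj (Rgt_ge _ _ HC1) (Rle_ge _ _ HC2)))). lra. }
      destruct (Rlt_or_le (C1 + C2) 0) as [HS|HS].
      2:{ pose proof (no_pos l1 l2 C1 C2 t H12 H1 H2 Ht (or_intror (conj HC1 (conj HC2 (Rle_ge _ _ HS))))). lra. }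
      destruct (tstar l1 l2 C1 C2 H12 H1 H2 HC1 HC2) as [E [M _]].
      specialize (M t). rewrite E, Hq in M.
      destruct Hsg as [Hl1|Hl1]; [left; split; auto; right; left|right; split; auto; left]; auto.
  - intros HH.
    assert (Hth : C1 > 0 /\ C2 < 0 /\ C1 + C2 < 0 /\ Theta l1 l2 C1 C2 <= 0 ->
                  exists t, t > 0 /\ q l1 l2 C1 C2 t = 0).
    { intros [HC1 [HC2 [HS HT]]].
      destruct (tstar l1 l2 C1 C2 H12 H1 H2 HC1 HC2) as [E [_ P]].
      apply (zero_of _ _ _ _ _ H1 H2 (P HS)). lra. }
    assert (Hc : C1 = 0 /\ C2 < 0 /\ l2 > 0 -> exists t, t > 0 /\ q l1 l2 C1 C2 t = 0).
    { intros [HC1 [HC2 Hl2]]. destruct (ex1c l1 l2 C1 C2 H1 Hl2 HC1 HC2) as [t [Ht Hq]].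
      apply (zero_of _ _ _ _ t); auto. }
    assert (Hd : C1 = 0 /\ C2 < l2 /\ l2 < 0 -> exists t, t > 0 /\ q l1 l2 C1 C2 t = 0).
    { intros [HC1 [HC2 Hl2]]. destruct (ex1d l1 l2 C1 C2 H1 Hl2 HC1 HC2) as [t [Ht Hq]].
      apply (zero_of _ _ _ _ t); auto. }
    destruct HH as [[Hl1 [HA|[HA|[HA|HA]]]]|[Hl1 [HA|[HA|[HA|HA]]]]]; auto.
    + destruct (ex1a l1 l2 C1 C2 H12 Hl1 H2 HA) as [t [Ht Hq]].
      apply (zero_of _ _ _ _ t); auto.
    + destruct HA as [HA HB].
      destruct (ex2b l1 l2 C1 C2 H12 Hl1 HA HB) as [t [Ht Hq]].
      apply (zero_of _ _ _ _ t); auto.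
Qed.
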